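(* In the setting of the Structural Lemma for SpDeques, let $T_\infty$ be an integer at least the depth of $\mathcal T$ and define $w(v) = T_\infty - d(v)$, where $d(v)$ is the depth of $v$ in $\mathcal T$. Then at every moment of the process, with $v_0$ the assigned node (if any) and $v_1,\ldots,v_k$ the deque nodes from bottom to top, \[ w(v_0) \leq w(v_1) < w(v_2) < \cdots < w(v_{k-1}) < w(v_k). \]
   Context: Setting: $\mathcal T$ is a rooted tree; a state consists of an optional assigned node $v_0$ and a deque $v_1,\ldots,v_k$ (bottom to top) of non-root nodes of $\mathcal T$; the state changes only by (a) assigning any non-root node when there is no assigned node and the deque is empty; (b) executing the assigned node $v_0$: with no children, $v_0$ is discarded and the bottom deque node (if any) is removed and becomes assigned; with one child $x$, $x$ becomes assigned; with two children $x,y$, $x$ is pushed to the bottom of the deque and $y$ becomes assigned; (c) removing the top deque node. The weight $w(v)$ corresponds to the paper's node weight $T_\infty - d(v)$ with $T_\infty$ the critical-path length. *)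

(* Defs.v *)
From HB Require Import structures.
From mathcomp Require Import all_boot all_order all_algebra.
Set Implicit Arguments. Unset Strict Implicit. Unset Printing Implicit Defensive.
Import Order.TTheory GRing.Theory Num.Theory.

Section SpDeque.
Variables (T : finType) (root : T) (par : T -> T).

Definition is_rooted_tree : Prop :=
  par root = root /\ forall v : T, exists n : nat, iter n par v = root.

(* depth d(v) = least n with par^n(v) = root (it is < #|T| in a rooted tree). *)
Definition depth (v : T) : nat :=
  find (fun n => iter n par v == root) (iota 0 #|T|).

Definition tree_depth : nat := \max_(v : T) depth v.

Definition children (v : T) : {set T} := [set x | (x != root) && (par x == v)].

(* A state: optional assigned node v0, and the deque v1..vk as a seq
   listed from bottom (head) to top (last). *)
Definition state := (option T * seq T)%type.

Inductive step : state -> state -> Prop :=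
  | step_assign (v : T) : v != root -> step (None, [::]) (Some v, [::])
  | step_leaf_empty (v0 : T) :
      children v0 = set0 -> step (Some v0, [::]) (None, [::])
  | step_leaf_pop (v0 x : T) (dq : seq T) :
      children v0 = set0 -> step (Some v0, x :: dq) (Some x, dq)
  | step_one (v0 x : T) (dq : seq T) :
      children v0 = [set x] -> step (Some v0, dq) (Some x, dq)
  | step_two (v0 x y : T) (dq : seq T) :
      x != y -> children v0 = [set x; y] ->
      step (Some v0, dq) (Some y, x :: dq)
  | step_steal (o : option T) (dq : seq T) (x : T) :
      step (o, rcons dq x) (o, dq).

Inductive reachable : state -> Prop :=
  | reach_init : reachable (None, [::])
  | reach_step (s s' : state) : reachable s -> step s s' -> reachable s'.

End SpDeque.

(* Main.v *)
Require Import Defs.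
From HB Require Import structures.
From mathcomp Require Import all_boot all_order all_algebra.
Import Order.TTheory GRing.Theory Num.Theory.

Section Aux.
Variables (T : finType) (root : T) (par : T -> T).
Hypothesis Htree : is_rooted_tree root par.

Local Notation D := (depth root par).

Lemma exists_small v : exists2 m, m < #|T| & iter m par v = root.
Proof.
case: Htree => _ /(_ v) [n Hn].
have Hc : fconnect par v root by rewrite -Hn fconnect_iter.
exists (findex par v root); last exact: iter_findex.
apply: leq_trans (findex_max Hc) _; exact: max_card.
Qed.

Lemma depth_spec v : D v < #|T| /\ iter (D v) par v = root.
Proof.
have Hh : has (fun n => iter n par v == root) (iota 0 #|T|).
  case: (exists_small v) => m Hm Hi; apply/hasP; exists m.
    by rewrite mem_iota.
  by rewrite Hi.
have Hlt := Hh; rewrite has_find size_iota in Hlt.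
have := nth_find 0 Hh; rewrite nth_iota // add0n => /eqP H.
by split.
Qed.

Lemma depth_min v m : m < #|T| -> iter m par v = root -> D v <= m.
Proof.
move=> Hm Hi; rewrite leqNgt; apply/negP => Hlt.
have := before_find 0 (Hlt : m < find _ _).
by rewrite nth_iota // add0n Hi eqxx.
Qed.

Lemma depth_child x : x != root -> D x = (D (par x)).+1.
Proof.
move=> Hx.
case: (depth_spec x) => Hx1 Hx2.
case: (depth_spec (par x)) => Hp1 Hp2.
have Dx0 : D x != 0 by apply: contra Hx => /eqP E; rewrite E in Hx2; apply/eqP.
move: Hx1 Hx2 Dx0; case Ed: (D x) => [|n] // Hx1 Hx2 _.
have Hle : D (par x) <= n.
  apply: depth_min; first exact: ltnW.
  by rewrite -iterSr.
have Hge : n.+1 <= (D (par x)).+1.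
  rewrite -Ed; apply: depth_min; last by rewrite iterSr.
  by apply: leq_ltn_trans Hx1; rewrite ltnS.
by apply/eqP; rewrite eqn_leq Hge /= ltnS.
Qed.

Definition Inv (s : state T) : Prop :=
  (forall v0 v1 rest, s.1 = Some v0 -> s.2 = v1 :: rest -> D v1 <= D v0) /\
  sorted (fun a b => D b < D a) s.2.

Lemma child_mem v0 x : x \in children root par v0 -> x != root /\ par x = v0.
Proof. by rewrite inE => /andP [H /eqP]. Qed.

Lemma inv_reach s : reachable root par s -> Inv s.
Proof.
elim=> [|s1 s2 _ [H1 H2] st]; first by split.
case: st H1 H2 => /=.
- by move=> v _ _ _; split.
- by move=> v _ _ _; split.
- move=> v0 x dq _ H1 H2; split => //=; last exact: path_sorted H2.
  move=> a v1 rest [<-] E; subst dq; by move: H2 => /= /andP [/ltnW].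
- move=> v0 x dq Hc H1 H2; split => //= a v1 rest [<-] E.
  have [Hx Hp] : x != root /\ par x = v0 by apply: child_mem; rewrite Hc set11.
  rewrite (depth_child x Hx) Hp; apply: leq_trans (H1 _ _ _ erefl E) _; exact: leqnSn.
- move=> v0 x y dq Hxy Hc H1 H2.
  have [Hx Hpx] : x != root /\ par x = v0 by apply: child_mem; rewrite Hc !inE eqxx.
  have [Hy Hpy] : y != root /\ par y = v0 by apply: child_mem; rewrite Hc !inE eqxx orbT.
  split => /=.
    by move=> a v1 rest [<-] [<- _]; rewrite (depth_child x Hx) (depth_child y Hy) Hpx Hpy.
  case: dq H1 H2 => //= v1 rest H1 ->; rewrite andbT (depth_child x Hx) Hpx ltnS.
  exact: H1 _ _ _ erefl erefl.
- move=> o dq x H1 H2; split => /=.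
    move=> v0 v1 rest Eo Ed; apply: (H1 v0 v1 (rcons rest x) Eo); by rewrite Ed.
  case: dq H1 H2 => //= v1 rest _; rewrite rcons_path => /andP [] //.
Qed.

End Aux.

Theorem mainTheorem5 (T : finType) (root : T) (par : T -> T)
  (Htree : is_rooted_tree root par)
  (Tinf : int) (HTinf : ((tree_depth root par)%:Z <= Tinf)%R)
  (o : option T) (dq : seq T) :
  reachable root par (o, dq) ->
  let w := fun v : T => (Tinf - (depth root par v)%:Z)%R in
  (forall (v0 v1 : T) (rest : seq T),
      o = Some v0 -> dq = v1 :: rest -> (w v0 <= w v1)%R) /\
  sorted (fun a b => (w a < w b)%R) dq.
Proof.
move=> /(@inv_reach T root par Htree) [H1 H2] w; split.
  move=> v0 v1 rest Eo Ed; rewrite /w lerD2l lerN2 lez_nat.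
  exact: H1 _ _ _ Eo Ed.
apply: sub_sorted H2 => a b H; rewrite /w ltrD2l ltrN2 ltz_nat //.
Qed.
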